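(* Let $\mathbb{R}$ be an EZ-category and $\phi:X\to Y$ a map of set-valued presheaves on $\mathbb{R}$. The following are equivalent: (i) for each object $r$ of $\mathbb{R}$, the relative latching map $X_r\cup_{L_r(X)}L_r(Y)\to Y_r$ is a free $\mathrm{Aut}(r)$-extension; (ii) $\phi$ is a monomorphism, and for each object $r$ and each non-degenerate element $y\in Y_r\setminus\phi(X)_r$, the isotropy group $\{g\in\mathrm{Aut}(r)\mid g^*(y)=y\}$ is trivial; (iii) for each $n\ge0$, the relative $n$-skeleton $\mathit{sk}_n(\phi)=X\cup_{\mathit{sk}_n(X)}\mathit{sk}_n(Y)$ is obtained from the relative $(n-1)$-skeleton $\mathit{sk}_{n-1}(\phi)$ by attaching (i.e. by a pushout along) a coproduct of boundary inclusions $\partial\mathbb{R}[r]\hookrightarrow\mathbb{R}[r]$ of representable presheaves with $d(r)=n$.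
   Context: An EZ-category is a small category $\mathbb{R}$ with a degree function $d:\mathrm{Ob}(\mathbb{R})\to\mathbb{N}$ such that (i) monomorphisms preserve (resp. strictly raise) the degree iff they are invertible (resp. non-invertible); (ii) every morphism factors as a split epimorphism followed by a monomorphism; (iii) any pair of split epimorphisms with common domain has an absolute pushout. Split epimorphisms are degeneracy operators, monomorphisms are face operators. $\mathbb{R}[r]=\mathbb{R}(-,r)$; an element $x\in X_r$ (a map $\mathbb{R}[r]\to X$) is degenerate if it factors through a non-invertible degeneracy $r\to s$, non-degenerate otherwise. For a presheaf $X$, $L_r(X)=\mathrm{colim}\,X_s$ over the category whose objects are the non-invertible degeneracies $u:r\to s$ and whose morphisms from $u$ to $u':r\to s'$ are $w:s\to s'$ with $u'=wu$; the map $L_r(X)\to X_r$ is induced by the $u^*$, and $\mathrm{Aut}(r)$ acts on everything. A map of $G$-sets $f:A\to B$ is a free $G$-extension if it is injective and $G$ acts freely on $B\setminus f(A)$. $\mathit{sk}_n(X)_r=\mathrm{colim}_{(r\to s),\,d(s)\le n}X_s$ (left Kan extension of the restriction to objects of degree $\le n$), with counit $\mathit{sk}_n(X)\to X$; $\mathit{sk}_{-1}(X)=\emptyset$. The formal boundary $\partial\mathbb{R}[r]\subseteq\mathbb{R}[r]$ is the subpresheaf of elements factoring through a non-invertible face operator $s\to r$. *)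

(* Defs.v *)
From Stdlib Require Import Relations ClassicalEpsilon.

Unset Implicit Arguments.

Record Cat := {
  Ob : Type;
  Hom : Ob -> Ob -> Type;
  idm : forall a, Hom a a;
  comp : forall a b c, Hom b c -> Hom a b -> Hom a c;  (* comp g f = g o f *)
  comp_id_l : forall a b (f : Hom a b), comp a b b (idm b) f = f;
  comp_id_r : forall a b (f : Hom a b), comp a a b f (idm a) = f;
  comp_assoc : forall a b c e (f : Hom a b) (g : Hom b c) (h : Hom c e),
      comp a c e h (comp a b c g f) = comp a b e (comp b c e h g) f
}.
Arguments idm {_} _.
Arguments comp {_ _ _ _} _ _.

Record Functor (C E : Cat) := {
  Fob : Ob C -> Ob E;
  Fhom : forall a b, Hom C a b -> Hom E (Fob a) (Fob b);
  F_id : forall a, Fhom a a (idm a) = idm (Fob a);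
  F_comp : forall a b c (f : Hom C a b) (g : Hom C b c),
      Fhom a c (comp g f) = comp (Fhom b c g) (Fhom a b f)
}.
Arguments Fhom {_ _} _ {_ _} _.
Arguments Fob {_ _} _ _.

Section CatNotions.
Context {C : Cat}.

Definition is_iso {a b : Ob C} (f : Hom C a b) : Prop :=
  exists g : Hom C b a, comp g f = idm a /\ comp f g = idm b.

Definition is_mono {a b : Ob C} (f : Hom C a b) : Prop :=
  forall z (u v : Hom C z a), comp f u = comp f v -> u = v.

Definition is_split_epi {a b : Ob C} (f : Hom C a b) : Prop :=
  exists s : Hom C b a, comp f s = idm b.

Definition is_pushout {a b c e : Ob C} (f : Hom C a b) (g : Hom C a c)
  (h : Hom C b e) (k : Hom C c e) : Prop :=
  comp h f = comp k g /\
  forall z (p : Hom C b z) (q : Hom C c z), comp p f = comp q g ->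
    exists t : Hom C e z, (comp t h = p /\ comp t k = q) /\
      forall t' : Hom C e z, comp t' h = p -> comp t' k = q -> t' = t.
End CatNotions.

Definition is_absolute_pushout {C : Cat} {a b c e : Ob C} (f : Hom C a b)
  (g : Hom C a c) (h : Hom C b e) (k : Hom C c e) : Prop :=
  is_pushout f g h k /\
  forall (E : Cat) (F : Functor C E),
    is_pushout (Fhom F f) (Fhom F g) (Fhom F h) (Fhom F k).

Definition is_EZ (C : Cat) (d : Ob C -> nat) : Prop :=
  (forall r s (f : Hom C r s), is_mono f ->
     (d r = d s <-> is_iso f) /\ (d r < d s <-> ~ is_iso f)) /\
  (forall r s (f : Hom C r s), exists t (e : Hom C r t) (m : Hom C t s),
     is_split_epi e /\ is_mono m /\ f = comp m e) /\
  (forall a b c (e1 : Hom C a b) (e2 : Hom C a c),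
     is_split_epi e1 -> is_split_epi e2 ->
     exists x (h : Hom C b x) (k : Hom C c x), is_absolute_pushout e1 e2 h k).

Definition is_ndegeneracy {C : Cat} {r s : Ob C} (u : Hom C r s) : Prop :=
  is_split_epi u /\ ~ is_iso u.

Definition quot {A : Type} (R : A -> A -> Prop) : Type :=
  { P : A -> Prop | exists a, P = clos_refl_sym_trans A R a }.
Definition cls {A : Type} (R : A -> A -> Prop) (a : A) : quot R :=
  exist _ (clos_refl_sym_trans A R a) (ex_intro _ a eq_refl).
Definition rep {A : Type} {R : A -> A -> Prop} (q : quot R) : A :=
  proj1_sig (constructive_indefinite_description _ (proj2_sig q)).

Record Psh (C : Cat) := {
  pobj : Ob C -> Type;
  pact : forall r s, Hom C r s -> pobj s -> pobj r   (* pact f x = f^* x *)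
}.
Arguments pobj {C} _ _.
Arguments pact {C} _ {r s} _ _.

Definition is_psh {C : Cat} (X : Psh C) : Prop :=
  (forall r (x : pobj X r), pact X (idm r) x = x) /\
  (forall r s t (f : Hom C r s) (g : Hom C s t) (x : pobj X t),
      pact X (comp g f) x = pact X f (pact X g x)).

Definition PMap {C : Cat} (X Y : Psh C) := forall r, pobj X r -> pobj Y r.

Definition is_nat {C : Cat} {X Y : Psh C} (phi : PMap X Y) : Prop :=
  forall r s (f : Hom C r s) (x : pobj X s),
    phi r (pact X f x) = pact Y f (phi s x).

Definition is_psh_mono {C : Cat} {X Y : Psh C} (phi : PMap X Y) : Prop :=
  forall (Z : Psh C) (a b : PMap Z X), is_psh Z -> is_nat a -> is_nat b ->
    (forall r z, phi r (a r z) = phi r (b r z)) ->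
    forall r z, a r z = b r z.

Definition is_psh_pushout {C : Cat} {A B Cc D : Psh C}
  (i : PMap A B) (j : PMap A Cc) (h : PMap B D) (k : PMap Cc D) : Prop :=
  (forall r a, h r (i r a) = k r (j r a)) /\
  forall (Z : Psh C) (p : PMap B Z) (q : PMap Cc Z),
    is_psh Z -> is_nat p -> is_nat q ->
    (forall r a, p r (i r a) = q r (j r a)) ->
    exists t : PMap D Z, is_nat t /\
      (forall r b, t r (h r b) = p r b) /\ (forall r c, t r (k r c) = q r c) /\
      forall t' : PMap D Z, is_nat t' ->
        (forall r b, t' r (h r b) = p r b) -> (forall r c, t' r (k r c) = q r c) ->
        forall r x, t' r x = t r x.

Definition nondegenerate {C : Cat} (Y : Psh C) (r : Ob C) (y : pobj Y r) : Prop :=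
  ~ exists s (u : Hom C r s) (z : pobj Y s), is_ndegeneracy u /\ y = pact Y u z.

Definition free_aut_ext {C : Cat} (Y : Psh C) (r : Ob C) {A : Type}
  (f : A -> pobj Y r) : Prop :=
  (forall a1 a2, f a1 = f a2 -> a1 = a2) /\
  forall y, ~ (exists a, f a = y) ->
    forall g : Hom C r r, is_iso g -> pact Y g y = y -> g = idm r.

Section Latching.
Context {C : Cat}.

Record latch_el (X : Psh C) (r : Ob C) := {
  ls : Ob C; lu : Hom C r ls; lu_deg : is_ndegeneracy lu; lx : pobj X ls }.
Arguments ls {_ _}. Arguments lu {_ _}. Arguments lu_deg {_ _}. Arguments lx {_ _}.

(* morphism w : u -> u' (u' = w u) gives (u', x') ~ (u, w^* x') *)
Definition latch_rel (X : Psh C) (r : Ob C) (a b : latch_el X r) : Prop :=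
  exists w : Hom C (ls b) (ls a), lu a = comp w (lu b) /\ lx b = pact X w (lx a).

Definition Lr (X : Psh C) (r : Ob C) : Type := quot (latch_rel X r).

Definition latch_map (X : Psh C) (r : Ob C) (l : Lr X r) : pobj X r :=
  let a := rep l in pact X (lu a) (lx a).

Definition L_map {X Y : Psh C} (phi : PMap X Y) (r : Ob C) (l : Lr X r) : Lr Y r :=
  let a := rep l in
  cls (latch_rel Y r) {| ls := ls a; lu := lu a; lu_deg := lu_deg a; lx := phi _ (lx a) |}.

(* X_r  \cup_{L_r X}  L_r Y *)
Definition rel_latch_rel {X Y : Psh C} (phi : PMap X Y) (r : Ob C)
  (p q : pobj X r + Lr Y r) : Prop :=
  exists l : Lr X r, p = inl (latch_map X r l) /\ q = inr (L_map phi r l).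

Definition RelLatch {X Y : Psh C} (phi : PMap X Y) (r : Ob C) : Type :=
  quot (rel_latch_rel phi r).

Definition rel_latch_map {X Y : Psh C} (phi : PMap X Y) (r : Ob C)
  (q : RelLatch phi r) : pobj Y r :=
  match rep q with
  | inl x => phi r x
  | inr l => latch_map Y r l
  end.
End Latching.

Section Skeleta.
Context {C : Cat} (d : Ob C -> nat).

(* sk_lt k X = sk_{k-1} X : colimit over (r -> s) with d s < k *)
Record sk_el (X : Psh C) (k : nat) (r : Ob C) := {
  ss : Ob C; sf : Hom C r ss; sdeg : d ss < k; sx : pobj X ss }.
Arguments ss {_ _ _}. Arguments sf {_ _ _}. Arguments sdeg {_ _ _}. Arguments sx {_ _ _}.

Definition sk_rel (X : Psh C) (k : nat) (r : Ob C) (a b : sk_el X k r) : Prop :=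
  exists w : Hom C (ss b) (ss a), sf a = comp w (sf b) /\ sx b = pact X w (sx a).

Definition sk_lt (X : Psh C) (k : nat) : Psh C := {|
  pobj r := quot (sk_rel X k r);
  pact r s h q := let a := rep q in
    cls (sk_rel X k r)
      {| ss := ss a; sf := comp (sf a) h; sdeg := sdeg a; sx := sx a |} |}.

Definition sk_counit (X : Psh C) (k : nat) : PMap (sk_lt X k) X :=
  fun r q => let a := rep q in pact X (sf a) (sx a).

Definition sk_map {X Y : Psh C} (phi : PMap X Y) (k : nat) :
  PMap (sk_lt X k) (sk_lt Y k) :=
  fun r q => let a := rep q in
    cls (sk_rel Y k r) {| ss := ss a; sf := sf a; sdeg := sdeg a; sx := phi _ (sx a) |}.

Definition sk_widen (X : Psh C) (k : nat) : PMap (sk_lt X k) (sk_lt X (S k)) :=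
  fun r q => let a := rep q in
    cls (sk_rel X (S k) r)
      {| ss := ss a; sf := sf a; sdeg := le_S _ _ (sdeg a); sx := sx a |}.

(* relative skeleton  relsk k phi = X \cup_{sk_{k-1} X} sk_{k-1} Y
   (objectwise pushout) *)
Definition relsk_rel {X Y : Psh C} (phi : PMap X Y) (k : nat) (r : Ob C)
  (p q : pobj X r + pobj (sk_lt Y k) r) : Prop :=
  exists l : pobj (sk_lt X k) r,
    p = inl (sk_counit X k r l) /\ q = inr (sk_map phi k r l).

Definition relsk {X Y : Psh C} (phi : PMap X Y) (k : nat) : Psh C := {|
  pobj r := quot (relsk_rel phi k r);
  pact r s h q :=
    cls (relsk_rel phi k r)
      (match rep q with
       | inl x => inl (pact X h x)
       | inr l => inr (pact (sk_lt Y k) h l)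
       end) |}.

Definition relsk_incl {X Y : Psh C} (phi : PMap X Y) (k : nat) :
  PMap (relsk phi k) (relsk phi (S k)) :=
  fun r q =>
    cls (relsk_rel phi (S k) r)
      (match rep q with
       | inl x => inl x
       | inr l => inr (sk_widen Y k r l)
       end).
End Skeleta.

Section Repr.
Context {C : Cat}.

Definition yon (r : Ob C) : Psh C := {|
  pobj s := Hom C s r;
  pact s t h f := comp f h |}.

Definition bd_pred {r s : Ob C} (f : Hom C s r) : Prop :=
  exists t (m : Hom C t r) (g : Hom C s t), is_mono m /\ ~ is_iso m /\ f = comp m g.

Lemma bd_pred_act {r s t : Ob C} (h : Hom C s t) (f : Hom C t r) :
  bd_pred f -> bd_pred (comp f h).
Proof.
  intros [u [m [g [Hm [Hi ->]]]]].
  exists u, m, (comp g h). split; [exact Hm|split; [exact Hi|]].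
  symmetry. apply comp_assoc.
Qed.

Definition bdry (r : Ob C) : Psh C := {|
  pobj s := { f : Hom C s r | bd_pred f };
  pact s t h f := exist _ (comp (proj1_sig f) h) (bd_pred_act h (proj1_sig f) (proj2_sig f)) |}.

Definition copr {I : Type} (F : I -> Psh C) : Psh C := {|
  pobj s := { i : I & pobj (F i) s };
  pact s t h x := existT _ (projT1 x) (pact (F (projT1 x)) h (projT2 x)) |}.

Definition bdry_incl {I : Type} (rho : I -> Ob C) :
  PMap (copr (fun i => bdry (rho i))) (copr (fun i => yon (rho i))) :=
  fun s x => existT _ (projT1 x) (proj1_sig (projT2 x)).
End Repr.

(* Main.v *)
Require Import Defs.
From Stdlib Require Import Relations ClassicalEpsilon FunctionalExtensionality PropExtensionality ProofIrrelevance Classical Eqdep Lia PeanoNat.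

Arguments ls {C X r} _. Arguments lu {C X r} _. Arguments lu_deg {C X r} _. Arguments lx {C X r} _.
Arguments ss {C d X k r} _. Arguments sf {C d X k r} _. Arguments sdeg {C d X k r} _. Arguments sx {C d X k r} _.

Lemma sig_ext {B : Type} (P : B -> Prop) (u v : sig P) : proj1_sig u = proj1_sig v -> u = v.
Proof. destruct u as [u Hu], v as [v Hv]; simpl; intro E; subst; f_equal; apply proof_irrelevance. Qed.

Section Quot.
Context {A : Type} (R : A -> A -> Prop).
Notation rst := (clos_refl_sym_trans A R).

Lemma rep_spec (q : quot R) : proj1_sig q = rst (rep q).
Proof. unfold rep. destruct (constructive_indefinite_description _ (proj2_sig q)) as [a Ha]. simpl. exact Ha. Qed.

Lemma cls_eq a b : rst a b -> cls R a = cls R b.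
Proof.
  intro H. apply sig_ext. simpl. apply functional_extensionality; intro c.
  apply propositional_extensionality; split; intro Hc.
  - eapply rst_trans; [apply rst_sym; exact H| exact Hc].
  - eapply rst_trans; [exact H|exact Hc].
Qed.

Lemma cls_inj a b : cls R a = cls R b -> rst a b.
Proof.
  intro H. apply (f_equal (@proj1_sig _ _)) in H. simpl in H.
  assert (E : rst b b) by apply rst_refl. rewrite <- H in E. exact E.
Qed.

Lemma cls_rep (q : quot R) : cls R (rep q) = q.
Proof. apply sig_ext. simpl. symmetry. apply rep_spec. Qed.

Lemma rep_cls a : rst (rep (cls R a)) a.
Proof. apply cls_inj. apply cls_rep. Qed.

Lemma quot_ind' (P : quot R -> Prop) : (forall a, P (cls R a)) -> forall q, P q.
Proof. intros H q. rewrite <- (cls_rep q). apply H. Qed.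

Lemma rst_fun {B : Type} (g : A -> B) :
  (forall a a', R a a' -> g a = g a') -> forall a a', rst a a' -> g a = g a'.
Proof. intros Hg a a' H. induction H; auto; congruence. Qed.

Lemma rep_fun {B : Type} (g : A -> B) :
  (forall a a', R a a' -> g a = g a') -> forall a, g (rep (cls R a)) = g a.
Proof. intros Hg a. apply (rst_fun g Hg). apply rep_cls. Qed.

Lemma rst_map {B : Type} (S : B -> B -> Prop) (g : A -> B) :
  (forall a a', R a a' -> clos_refl_sym_trans B S (g a) (g a')) ->
  forall a a', rst a a' -> clos_refl_sym_trans B S (g a) (g a').
Proof.
  intros Hg a a' H. induction H.
  - auto.
  - apply rst_refl.
  - apply rst_sym; auto.
  - eapply rst_trans; eauto.
Qed.


Lemma rst_equiv : (forall a, R a a) -> (forall a b, R a b -> R b a) ->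
  (forall a b c, R a b -> R b c -> R a c) -> forall a b, rst a b -> R a b.
Proof. intros Hr Hs Ht a b H. induction H; eauto. Qed.
End Quot.
Lemma cls_map {A B : Type} (R : A -> A -> Prop) (S : B -> B -> Prop) (g : A -> B) :
  (forall a a', R a a' -> clos_refl_sym_trans B S (g a) (g a')) ->
  forall a, cls S (g (rep (cls R a))) = cls S (g a).
Proof. intros Hg a. apply cls_eq. apply (rst_map R S g Hg). apply rep_cls. Qed.

Section CatL.
Context {C : Cat}.

Lemma idl {a b} (f : Hom C a b) : comp (idm b) f = f.
Proof. apply comp_id_l. Qed.
Lemma idr {a b} (f : Hom C a b) : comp f (idm a) = f.
Proof. apply comp_id_r. Qed.

Lemma cA {a b c e} (f : Hom C a b) (g : Hom C b c) (h : Hom C c e) :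
  comp h (comp g f) = comp (comp h g) f.
Proof. apply comp_assoc. Qed.

Lemma id_iso a : is_iso (idm a : Hom C a a).
Proof. exists (idm a). rewrite idl. auto. Qed.

Lemma id_split a : is_split_epi (idm a : Hom C a a).
Proof. exists (idm a). apply idl. Qed.

Lemma section_mono {a b} (e : Hom C a b) (s : Hom C b a) : comp e s = idm b -> is_mono s.
Proof.
  intros H z u v E. rewrite <- (idl u), <- (idl v), <- H, <- !cA, E. reflexivity.
Qed.

Lemma iso_mono {a b} (f : Hom C a b) : is_iso f -> is_mono f.
Proof. intros [g [H1 H2]]. exact (section_mono g f H1). Qed.

Lemma iso_split {a b} (f : Hom C a b) : is_iso f -> is_split_epi f.
Proof. intros [g [H1 H2]]. exists g. exact H2. Qed.

Lemma split_comp {a b c} (f : Hom C a b) (g : Hom C b c) :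
  is_split_epi f -> is_split_epi g -> is_split_epi (comp g f).
Proof.
  intros [s Hs] [t Ht]. exists (comp s t). rewrite <- cA, (cA t s f), Hs, idl. exact Ht.
Qed.

Lemma iso_comp {a b c} (f : Hom C a b) (g : Hom C b c) :
  is_iso f -> is_iso g -> is_iso (comp g f).
Proof.
  intros [f' [Hf1 Hf2]] [g' [Hg1 Hg2]]. exists (comp f' g'). split.
  - rewrite <- cA, (cA f g g'), Hg1, idl. exact Hf1.
  - rewrite <- cA, (cA g' f' f), Hf2, idl. exact Hg2.
Qed.

Lemma split_retr_iso {a b} (u : Hom C a b) (r : Hom C b a) :
  is_split_epi u -> comp r u = idm a -> is_iso u.
Proof.
  intros [s Hs] Hr. exists r. split; auto.
  assert (r = s). { rewrite <- (idr r), <- Hs, cA, Hr, idl. reflexivity. }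
  subst. exact Hs.
Qed.

Lemma split_mono_iso {a b} (u : Hom C a b) : is_split_epi u -> is_mono u -> is_iso u.
Proof.
  intros [s Hs] Hm. exists s. split; auto. apply Hm. rewrite cA, Hs, idl, idr. reflexivity.
Qed.

Definition inv_of {a b} (f : Hom C a b) (g : Hom C b a) := comp g f = idm a /\ comp f g = idm b.

Lemma inv_iso {a b} (f : Hom C a b) g : inv_of f g -> is_iso g.
Proof. intros [H1 H2]. exists f. split; auto. Qed.

Lemma iso_cancel_l {a b c} (f : Hom C b c) (g h : Hom C a b) : is_iso f -> comp f g = comp f h -> g = h.
Proof. intro Hf. apply iso_mono. exact Hf. Qed.

Lemma iso_cancel_r {a b c} (f : Hom C a b) (g h : Hom C b c) : is_iso f -> comp g f = comp h f -> g = h.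
Proof.
  intros [f' [H1 H2]] E. rewrite <- (idr g), <- (idr h), <- H2, !cA, E. reflexivity.
Qed.
End CatL.

Section Deg.
Context {C : Cat} (d : Ob C -> nat) (HEZ : is_EZ C d).

Lemma mono_deg {r s} (f : Hom C r s) : is_mono f -> d r <= d s.
Proof.
  intro Hm. destruct HEZ as [H1 _]. destruct (H1 r s f Hm) as [[A B] [E F]].
  destruct (classic (is_iso f)) as [Hi|Hi]. - rewrite (B Hi); lia. - specialize (F Hi); lia.
Qed.

Lemma mono_eq_iso {r s} (f : Hom C r s) : is_mono f -> d r = d s -> is_iso f.
Proof. intros Hm E. destruct HEZ as [H1 _]. apply (H1 r s f Hm). exact E. Qed.

Lemma mono_lt {r s} (f : Hom C r s) : is_mono f -> ~ is_iso f -> d r < d s.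
Proof. intros Hm Hi. destruct HEZ as [H1 _]. apply (H1 r s f Hm). exact Hi. Qed.

Lemma iso_deg {r s} (f : Hom C r s) : is_iso f -> d r = d s.
Proof. intros Hi. destruct HEZ as [H1 _]. apply (H1 r s f (iso_mono f Hi)). exact Hi. Qed.

Lemma split_deg {r s} (u : Hom C r s) : is_split_epi u -> d s <= d r.
Proof. intros [m Hm]. apply (mono_deg m). exact (section_mono u m Hm). Qed.

Lemma split_noniso_lt {r s} (u : Hom C r s) : is_split_epi u -> ~ is_iso u -> d s < d r.
Proof.
  intros [m Hm] Hi. assert (Hmm := section_mono u m Hm).
  destruct (Nat.eq_dec (d s) (d r)) as [E|E].
  - exfalso. apply Hi. destruct (mono_eq_iso m Hmm E) as [m' [A B]].
    assert (u = m'). { rewrite <- (idr u), <- B, cA, Hm, idl. reflexivity. }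
    subst. exists m. split; auto.
  - pose proof (mono_deg m Hmm). lia.
Qed.

Lemma split_eq_iso {r s} (u : Hom C r s) : is_split_epi u -> d s = d r -> is_iso u.
Proof. intros Hu E. apply NNPP; intro Hi. pose proof (split_noniso_lt u Hu Hi). lia. Qed.

Lemma factor {r s} (f : Hom C r s) : exists t (e : Hom C r t) (m : Hom C t s),
  is_split_epi e /\ is_mono m /\ f = comp m e.
Proof. destruct HEZ as [_ [H2 _]]. apply H2. Qed.
End Deg.

Section Funs.
Context {C : Cat}.

Definition GH (p : Ob C) (a : option (Ob C)) : Type :=
  match a with None => Prop | Some a => Hom C p a end.
Definition EH (p : Ob C) : Cat := {| Ob := option (Ob C); Hom a b := GH p a -> GH p b;
  idm a := fun x => x; comp a b c g f := fun x => g (f x);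
  comp_id_l := fun _ _ _ => eq_refl; comp_id_r := fun _ _ _ => eq_refl;
  comp_assoc := fun _ _ _ _ _ _ _ => eq_refl |}.
Program Definition FH (p : Ob C) : Functor C (EH p) :=
  {| Fob := Some; Fhom a b f := (fun g : Hom C p a => comp f g) : GH p (Some a) -> GH p (Some b) |}.
Next Obligation. apply functional_extensionality; intro x; apply idl. Qed.
Next Obligation. apply functional_extensionality; intro x; simpl. symmetry; apply cA. Qed.

Lemma abs_po_split {a b c e} (u : Hom C a b) (v : Hom C a c) (h : Hom C b e) (k : Hom C c e) :
  is_split_epi u -> is_split_epi v -> is_absolute_pushout u v h k ->
  is_split_epi h /\ is_split_epi k.
Proof.
  intros [su Hsu] [sv Hsv] [[Hc _] Habs].
  destruct (Habs (EH e) (FH e)) as [_ H].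
  specialize (H None (fun _ => True) (fun _ => True) eq_refl).
  destruct H as [t [[Ht1 Ht2] Hu]].
  set (P1 := (fun x : Hom C e e => (exists y, x = comp h y) \/ (exists y, x = comp k y)) : GH e (Some e) -> GH e None).
  assert (E1 : P1 = t).
  { apply Hu; simpl; apply functional_extensionality; intro y; apply propositional_extensionality;
    split; auto; intros _; [left|right]; exists y; reflexivity. }
  assert (E2 : (fun _ => True) = t).
  { apply Hu; reflexivity. }
  assert (HP : P1 (idm e)). { rewrite E1, <- E2. exact I. }
  destruct HP as [[y Hy]|[y Hy]].
  - split; [exists y; auto|]. exists (comp v (comp su y)).
    rewrite cA, <- Hc, <- cA, (cA y su u), Hsu, idl. auto.
  - split; [|exists y; auto]. exists (comp u (comp sv y)).
    rewrite cA, Hc, <- cA, (cA y sv v), Hsv, idl. auto.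
Qed.

Context (X : Psh C) (HX : is_psh X).

Definition GX (a : option (Ob C)) : Type := match a with None => unit | Some a => pobj X a end.
Definition EX : Cat := {| Ob := option (Ob C); Hom a b := GX b -> GX a;
  idm a := fun x => x; comp a b c g f := fun x => f (g x);
  comp_id_l := fun _ _ _ => eq_refl; comp_id_r := fun _ _ _ => eq_refl;
  comp_assoc := fun _ _ _ _ _ _ _ => eq_refl |}.
Program Definition FX : Functor C EX := {| Fob := Some; Fhom a b f := (pact X f : GX (Some b) -> GX (Some a)) |}.
Next Obligation. apply functional_extensionality; intro x; apply HX. Qed.
Next Obligation. apply functional_extensionality; intro x; apply HX. Qed.

Lemma abs_po_psh {a b c e} (u : Hom C a b) (v : Hom C a c) (h : Hom C b e) (k : Hom C c e)
  (z : pobj X b) (w : pobj X c) :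
  is_absolute_pushout u v h k -> pact X u z = pact X v w ->
  exists x, pact X h x = z /\ pact X k x = w.
Proof.
  intros [_ Habs] E. destruct (Habs EX FX) as [_ H].
  specialize (H None (fun _ => z) (fun _ => w)).
  destruct H as [t [[Ht1 Ht2] _]].
  - simpl. apply functional_extensionality; intros []. exact E.
  - exists (t tt). split.
    + exact (f_equal (fun f => f tt) Ht1).
    + exact (f_equal (fun f => f tt) Ht2).
Qed.
End Funs.

Section EZ.
Context {C : Cat} (d : Ob C -> nat) (HEZ : is_EZ C d) (X : Psh C) (HX : is_psh X).

Lemma pid {r} (x : pobj X r) : pact X (idm r) x = x.
Proof. apply HX. Qed.
Lemma pcomp {r s t} (f : Hom C r s) (g : Hom C s t) x : pact X (comp g f) x = pact X f (pact X g x).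
Proof. apply HX. Qed.

Lemma EZ_exist : forall r (x : pobj X r), exists s (u : Hom C r s) z,
  is_split_epi u /\ nondegenerate X s z /\ x = pact X u z.
Proof.
  assert (H : forall n r, d r < n -> forall (x : pobj X r), exists s (u : Hom C r s) z,
    is_split_epi u /\ nondegenerate X s z /\ x = pact X u z).
  { induction n as [|n IH]; intros r Hr x; [lia|].
    destruct (classic (nondegenerate X r x)) as [Hn|Hn].
    - exists r, (idm r), x. split; [apply id_split|]. split; auto. symmetry; apply pid.
    - apply NNPP in Hn. destruct Hn as [s [u [z [[Hu Hi] E]]]].
      pose proof (split_noniso_lt d HEZ u Hu Hi).
      destruct (IH s ltac:(lia) z) as [t [v [w [Hv [Hw E2]]]]].
      exists t, (comp v u), w. split; [apply split_comp; auto|]. split; auto.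
      rewrite pcomp, <- E2. exact E. }
  intros r x. exact (H (S (d r)) r (Nat.lt_succ_diag_r _) x).
Qed.

Lemma nondeg_split_iso {r s} (u : Hom C r s) (z : pobj X s) :
  is_split_epi u -> nondegenerate X r (pact X u z) -> is_iso u.
Proof. intros Hu Hn. apply NNPP; intro Hi. apply Hn. exists s, u, z. split; auto. split; auto. Qed.

Lemma EZ_unique {r s t} (u : Hom C r s) (v : Hom C r t) z w :
  is_split_epi u -> is_split_epi v -> nondegenerate X s z -> nondegenerate X t w ->
  pact X u z = pact X v w ->
  exists th : Hom C s t, is_iso th /\ v = comp th u /\ z = pact X th w.
Proof.
  intros Hu Hv Hz Hw E.
  destruct HEZ as [_ [_ H3]]. destruct (H3 _ _ _ u v Hu Hv) as [p [h [k Hp]]].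
  destruct (abs_po_split u v h k Hu Hv Hp) as [Hh Hk].
  destruct (abs_po_psh X HX u v h k z w Hp E) as [c [Ec1 Ec2]].
  assert (Ih : is_iso h). { apply (nondeg_split_iso h c Hh). rewrite Ec1. exact Hz. }
  assert (Ik : is_iso k). { apply (nondeg_split_iso k c Hk). rewrite Ec2. exact Hw. }
  destruct Ik as [k' [Hk1 Hk2]].
  exists (comp k' h). split; [apply iso_comp; auto; exists k; split; auto|]. split.
  - destruct Hp as [[Hc _] _]. rewrite <- cA, Hc, cA, Hk1, idl. reflexivity.
  - rewrite (pcomp h k'), <- Ec2, <- (pcomp k' k), Hk2, pid. symmetry; exact Ec1.
Qed.

Lemma nondeg_iso {r s} (g : Hom C r s) (z : pobj X s) :
  is_iso g -> nondegenerate X s z -> nondegenerate X r (pact X g z).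
Proof.
  intros [g' [H1 H2]] Hz [t [u [w [[Hu Hi] E]]]]. apply Hz.
  exists t, (comp u g'), w. split; [split|].
  - apply split_comp; auto. apply iso_split. exists g. split; auto.
  - intro Hi2. apply Hi. assert (u = comp (comp u g') g) by (rewrite <- cA, H1, idr; auto).
    rewrite H. apply iso_comp; auto. exists g'; split; auto.
  - rewrite pcomp, <- E, <- pcomp, H2, pid. reflexivity.
Qed.

Lemma nondeg_id_deg {r} (y : pobj X r) t (f : Hom C r t) x :
  nondegenerate X r y -> y = pact X f x -> d r <= d t.
Proof.
  intros Hy E. destruct (factor d HEZ f) as [t1 [e [m [He [Hm Ef]]]]].
  subst f. rewrite pcomp in E. subst y.
  pose proof (nondeg_split_iso e _ He Hy). pose proof (iso_deg d HEZ e H).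
  pose proof (mono_deg d HEZ m Hm). lia.
Qed.

Lemma NF_low {s t} (f : Hom C s t) (x : pobj X t) : exists t2 (sg : Hom C s t2) z,
  is_split_epi sg /\ nondegenerate X t2 z /\ d t2 <= d t /\ pact X f x = pact X sg z.
Proof.
  destruct (factor d HEZ f) as [t1 [e [m [He [Hm Ef]]]]].
  destruct (EZ_exist t1 (pact X m x)) as [t2 [e' [z [He' [Hz E]]]]].
  exists t2, (comp e' e), z. split; [apply split_comp; auto|]. split; auto. split.
  - pose proof (split_deg d HEZ e' He'). pose proof (mono_deg d HEZ m Hm). lia.
  - subst f. rewrite !pcomp, E. reflexivity.
Qed.

Lemma NF_deg_le {s t t2} (f : Hom C s t) (x : pobj X t) (sg : Hom C s t2) z :
  is_split_epi sg -> nondegenerate X t2 z -> pact X f x = pact X sg z -> d t2 <= d t.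
Proof.
  intros Hs Hz E. destruct (NF_low f x) as [t3 [sg' [z' [Hs' [Hz' [Hd E']]]]]].
  rewrite E' in E. destruct (EZ_unique sg' sg z' z Hs' Hs Hz' Hz E) as [th [Ht _]].
  pose proof (iso_deg d HEZ th Ht). lia.
Qed.
End EZ.

Section Latch.
Context {C : Cat} (d : Ob C -> nat) (HEZ : is_EZ C d).

Section OneX.
Context (X : Psh C) (HX : is_psh X).

Definition lval {r} (a : latch_el X r) : pobj X r := pact X (lu a) (lx a).

Lemma latch_rel_val {r} (a b : latch_el X r) : latch_rel X r a b -> lval a = lval b.
Proof.
  intros [w [E1 E2]]. unfold lval. rewrite E2, <- (pcomp X HX), <- E1. reflexivity.
Qed.

Lemma latch_map_cls {r} (a : latch_el X r) : latch_map X r (cls (latch_rel X r) a) = lval a.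
Proof. exact (rep_fun (latch_rel X r) lval (@latch_rel_val r) a). Qed.

Lemma ndeg_comp {r s t} (u : Hom C r s) (v : Hom C s t) :
  is_ndegeneracy u -> is_split_epi v -> is_ndegeneracy (comp v u).
Proof.
  intros [Hu Hi] Hv. split; [apply split_comp; auto|].
  intros [g [G1 G2]]. apply Hi. apply (split_retr_iso u (comp g v) Hu). rewrite <- cA. exact G1.
Qed.

Lemma latch_nf {r} (a : latch_el X r) : exists b : latch_el X r,
  clos_refl_sym_trans _ (latch_rel X r) a b /\ nondegenerate X (ls b) (lx b).
Proof.
  destruct a as [s u Hu x].
  destruct (EZ_exist d HEZ X HX s x) as [t [v [z [Hv [Hz E]]]]].
  exists {| ls := t; lu := comp v u; lu_deg := ndeg_comp u v Hu Hv; lx := z |}.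
  split; auto. apply rst_sym, rst_step. exists v. simpl. split; auto.
Qed.

Lemma latch_inj {r} (l l' : Lr X r) : latch_map X r l = latch_map X r l' -> l = l'.
Proof.
  rewrite <- (cls_rep _ l), <- (cls_rep _ l'). generalize (rep l) (rep l'). clear l l'. intros a b.
  rewrite !latch_map_cls. intro E. apply cls_eq.
  destruct (latch_nf a) as [a1 [Ha1 Na1]]. destruct (latch_nf b) as [b1 [Hb1 Nb1]].
  rewrite (rst_fun _ _ (@latch_rel_val r) _ _ Ha1), (rst_fun _ _ (@latch_rel_val r) _ _ Hb1) in E.
  eapply rst_trans; [exact Ha1|]. eapply rst_trans; [|apply rst_sym; exact Hb1].
  destruct (EZ_unique d HEZ X HX (lu a1) (lu b1) (lx a1) (lx b1) (proj1 (lu_deg a1)) (proj1 (lu_deg b1)) Na1 Nb1 E)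
    as [th [Ht [E1 E2]]].
  apply rst_sym, rst_step. exists th. auto.
Qed.

Lemma latch_degen {r} (l : Lr X r) : ~ nondegenerate X r (latch_map X r l).
Proof. intro H. apply H. exists (ls (rep l)), (lu (rep l)), (lx (rep l)). split; auto. apply lu_deg. Qed.

Lemma latch_of_degen {r} (x : pobj X r) : ~ nondegenerate X r x -> exists l, latch_map X r l = x.
Proof.
  intro H. apply NNPP in H. destruct H as [s [u [z [Hu E]]]].
  exists (cls (latch_rel X r) {| ls := s; lu := u; lu_deg := Hu; lx := z |}).
  rewrite latch_map_cls. unfold lval. simpl. auto.
Qed.
End OneX.

Context (X Y : Psh C) (HX : is_psh X) (HY : is_psh Y) (phi : PMap X Y) (Hphi : is_nat phi).

Lemma L_latch {r} (l : Lr X r) : latch_map Y r (L_map phi r l) = phi r (latch_map X r l).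
Proof. unfold L_map. rewrite latch_map_cls. unfold lval. simpl. rewrite <- Hphi. reflexivity. exact HY. Qed.

Definition f_rl {r} (p : pobj X r + Lr Y r) : pobj Y r :=
  match p with inl x => phi r x | inr l => latch_map Y r l end.

Lemma rl_cls {r} p : rel_latch_map phi r (cls (rel_latch_rel phi r) p) = f_rl p.
Proof.
  exact (rep_fun (rel_latch_rel phi r) f_rl
    (fun a a' H => match H with ex_intro _ l (conj E1 E2) => ltac:(subst; simpl; symmetry; apply L_latch) end) p).
Qed.

Definition injph := forall r (x x' : pobj X r), phi r x = phi r x' -> x = x'.

Lemma mono_inj : is_psh_mono phi -> injph.
Proof.
  intros Hm r x x' E.
  pose (a := (fun s (f : Hom C s r) => pact X f x) : PMap (yon r) X).
  pose (b := (fun s (f : Hom C s r) => pact X f x') : PMap (yon r) X).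
  assert (Hyon : is_psh (yon r)).
  { split; intros; simpl; [apply idr| rewrite cA; reflexivity]. }
  assert (Ha : is_nat a). { intros s t f g. unfold a. simpl. apply (pcomp X HX). }
  assert (Hb : is_nat b). { intros s t f g. unfold b. simpl. apply (pcomp X HX). }
  pose proof (Hm (yon r) a b Hyon Ha Hb) as H.
  assert (H2 : a r (idm r) = b r (idm r)).
  { apply H. intros s f. unfold a, b. rewrite !Hphi, E. reflexivity. }
  unfold a, b in H2. rewrite !(pid X HX) in H2. exact H2.
Qed.

Lemma inj_mono : injph -> is_psh_mono phi.
Proof. intros Hi Z a b _ _ _ H r z. apply Hi. apply H. Qed.

Lemma phi_nondeg (Hi : injph) {r} (z : pobj X r) : nondegenerate X r z -> nondegenerate Y r (phi r z).
Proof.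
  intros Hz [s [u [y [[[sg Hsg] Hu] E]]]]. apply Hz.
  assert (Ey : y = phi s (pact X sg z)).
  { rewrite Hphi, E, <- (pcomp Y HY), Hsg, (pid Y HY). reflexivity. }
  exists s, u, (pact X sg z). split; [split; [exists sg; auto|auto]|].
  apply Hi. rewrite Hphi, <- Ey. exact E.
Qed.

Definition isotropy := forall (r : Ob C) (y : pobj Y r), nondegenerate Y r y ->
      ~ (exists x, phi r x = y) ->
      forall g : Hom C r r, is_iso g -> pact Y g y = y -> g = idm r.

Lemma ii_to_i : injph -> isotropy -> forall r, free_aut_ext Y r (rel_latch_map phi r).
Proof.
  intros Hi Hiso r. split.
  - intros q q'. rewrite <- (cls_rep _ q), <- (cls_rep _ q'). rewrite !rl_cls.
    generalize (rep q) (rep q'). clear q q'.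
    assert (Hmix : forall x l, phi r x = latch_map Y r l ->
              clos_refl_sym_trans _ (rel_latch_rel phi r) (inl x) (inr l)).
    { intros x l E.
      destruct (EZ_exist d HEZ X HX r x) as [s [v [z [Hv [Hz Ex]]]]].
      destruct (classic (is_iso v)) as [Iv|Iv].
      - exfalso. apply (latch_degen Y l). rewrite <- E, Ex, Hphi.
        apply (nondeg_iso Y HY); auto. apply phi_nondeg; auto.
      - set (la := cls (latch_rel X r) {| ls := s; lu := v; lu_deg := conj Hv Iv; lx := z |}).
        assert (Ela : latch_map X r la = x). { unfold la. rewrite (latch_map_cls X HX). unfold lval; simpl; auto. }
        apply rst_step. exists la. split; [rewrite Ela; auto|].
        f_equal. apply (latch_inj Y HY). rewrite L_latch, Ela. symmetry; exact E. }
    intros [x|l] [x'|l']; simpl; intro E.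
    + apply cls_eq. rewrite (Hi _ _ _ E). apply rst_refl.
    + apply cls_eq. apply Hmix; auto.
    + apply cls_eq. apply rst_sym. apply Hmix; auto.
    + apply cls_eq. rewrite (latch_inj Y HY _ _ E). apply rst_refl.
  - intros y Hy g Hg Eg. apply (Hiso r y); auto.
    + intro Hd. destruct (latch_of_degen Y HY y (fun H => H Hd)) as [l El].
      apply Hy. exists (cls (rel_latch_rel phi r) (inr l)). rewrite rl_cls. exact El.
    + intros [x Ex]. apply Hy. exists (cls (rel_latch_rel phi r) (inl x)). rewrite rl_cls. exact Ex.
Qed.

Lemma nondeg_class {r} (x : pobj X r) : nondegenerate X r x ->
  forall p, clos_refl_sym_trans _ (rel_latch_rel phi r) (inl x) p -> p = inl x.
Proof.
  intros Hx.
  assert (H : forall p q, clos_refl_sym_trans _ (rel_latch_rel phi r) p q -> (p = inl x <-> q = inl x)).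
  { intros p q H. induction H as [p q [l [E1 E2]]| | |]; try tauto.
    subst. split; intro E; try discriminate. injection E as E. exfalso.
    apply (latch_degen X l). rewrite E. exact Hx. }
  intros p Hp. apply (H _ _ Hp). reflexivity.
Qed.

Lemma i_to_inj : (forall r, free_aut_ext Y r (rel_latch_map phi r)) -> injph.
Proof.
  intros Hi.
  assert (NI : forall r (z x : pobj X r), nondegenerate X r z -> phi r z = phi r x -> z = x).
  { intros r z x Hz E.
    assert (E2 : cls (rel_latch_rel phi r) (inl z) = cls (rel_latch_rel phi r) (inl x)).
    { apply (proj1 (Hi r)). rewrite !rl_cls. exact E. }
    apply cls_inj in E2. apply nondeg_class in E2; auto. congruence. }
  assert (PN : forall r (z : pobj X r), nondegenerate X r z -> nondegenerate Y r (phi r z)).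
  { intros r z Hz. apply NNPP; intro Hd. apply (latch_of_degen Y HY) in Hd. destruct Hd as [l El].
    assert (E2 : cls (rel_latch_rel phi r) (inl z) = cls (rel_latch_rel phi r) (inr l)).
    { apply (proj1 (Hi r)). rewrite !rl_cls. simpl. auto. }
    apply cls_inj in E2. apply nondeg_class in E2; auto. discriminate. }
  intros r x x' E.
  destruct (EZ_exist d HEZ X HX r x) as [s [u [z [Hu [Hz Ex]]]]].
  destruct (EZ_exist d HEZ X HX r x') as [s' [u' [z' [Hu' [Hz' Ex']]]]].
  subst x x'. rewrite !Hphi in E.
  destruct (EZ_unique d HEZ Y HY u u' _ _ Hu Hu' (PN _ _ Hz) (PN _ _ Hz') E) as [th [Ht [E1 E2]]].
  rewrite <- Hphi in E2. apply NI in E2; auto. subst. rewrite (pcomp X HX). reflexivity.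
Qed.

Lemma i_to_iso : (forall r, free_aut_ext Y r (rel_latch_map phi r)) -> isotropy.
Proof.
  intros Hi r y Hy Hn g Hg Eg. apply (proj2 (Hi r) y); auto.
  intros [q Eq]. unfold rel_latch_map in Eq. destruct (rep q) as [x|l].
  - apply Hn. exists x; auto.
  - apply (latch_degen Y l). rewrite Eq. exact Hy.
Qed.
End Latch.

Section Sk.
Context {C : Cat} (d : Ob C -> nat) (HEZ : is_EZ C d).

Section OneX.
Context (X : Psh C) (HX : is_psh X).

Definition sval {k r} (a : sk_el d X k r) : pobj X r := pact X (sf a) (sx a).

Lemma sk_rel_val {k r} (a b : sk_el d X k r) : sk_rel d X k r a b -> sval a = sval b.
Proof. intros [w [E1 E2]]. unfold sval. rewrite E2, <- (pcomp X HX), <- E1. reflexivity. Qed.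

Lemma counit_cls {k r} (a : sk_el d X k r) : sk_counit d X k r (cls (sk_rel d X k r) a) = sval a.
Proof. exact (rep_fun (sk_rel d X k r) sval (@sk_rel_val k r) a). Qed.

Definition prec {k r r'} (h : Hom C r' r) (a : sk_el d X k r) : sk_el d X k r' :=
  {| ss := ss a; sf := comp (sf a) h; sdeg := sdeg a; sx := sx a |}.

Lemma prec_rel {k r r'} (h : Hom C r' r) a b : sk_rel d X k r a b -> sk_rel d X k r' (prec h a) (prec h b).
Proof. intros [w [E1 E2]]. exists w. simpl. split; auto. rewrite E1. symmetry. apply cA. Qed.

Lemma skact_cls {k r r'} (h : Hom C r' r) a :
  pact (sk_lt d X k) h (cls (sk_rel d X k r) a) = cls (sk_rel d X k r') (prec h a).
Proof. exact (cls_map _ _ (prec h) (fun a b H => rst_step _ _ _ _ (prec_rel h a b H)) a). Qed.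

Lemma sk_psh k : is_psh (sk_lt d X k).
Proof.
  split.
  - intros r q. rewrite <- (cls_rep _ q). generalize (rep q). intro a. rewrite skact_cls.
    destruct a; unfold prec; simpl; rewrite idr; reflexivity.
  - intros r s t f g q. rewrite <- (cls_rep _ q). generalize (rep q). intro a. rewrite !skact_cls.
    destruct a; unfold prec; simpl. rewrite cA. reflexivity.
Qed.

Lemma counit_nat {k r r'} (h : Hom C r' r) q :
  sk_counit d X k r' (pact (sk_lt d X k) h q) = pact X h (sk_counit d X k r q).
Proof.
  rewrite <- (cls_rep _ q). generalize (rep q). intro a. rewrite skact_cls, !counit_cls.
  unfold sval, prec; simpl. apply (pcomp X HX).
Qed.

Definition wd {k r} (a : sk_el d X k r) : sk_el d X (S k) r :=
  {| ss := ss a; sf := sf a; sdeg := le_S _ _ (sdeg a); sx := sx a |}.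

Lemma widen_cls {k r} a : sk_widen d X k r (cls (sk_rel d X k r) a) = cls (sk_rel d X (S k) r) (wd a).
Proof. exact (cls_map _ _ wd (fun a b H => rst_step _ _ _ _ (match H with ex_intro _ w Hw => ex_intro _ w Hw end)) a). Qed.

Lemma counit_widen {k r} q : sk_counit d X (S k) r (sk_widen d X k r q) = sk_counit d X k r q.
Proof.
  rewrite <- (cls_rep _ q). generalize (rep q). intro a. rewrite widen_cls, !counit_cls. reflexivity.
Qed.

Lemma widen_nat {k r r'} (h : Hom C r' r) q :
  sk_widen d X k r' (pact (sk_lt d X k) h q) = pact (sk_lt d X (S k)) h (sk_widen d X k r q).
Proof.
  rewrite <- (cls_rep _ q). generalize (rep q). intro a. rewrite skact_cls, !widen_cls, skact_cls. reflexivity.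
Qed.

Definition lowdeg k {r} (y : pobj X r) := exists t (f : Hom C r t) (x : pobj X t), d t < k /\ y = pact X f x.

Lemma counit_low {k r} q : lowdeg k (sk_counit d X k r q).
Proof.
  rewrite <- (cls_rep _ q). generalize (rep q). intro a. rewrite counit_cls.
  exists (ss a), (sf a), (sx a). split; [apply sdeg|reflexivity].
Qed.

Lemma low_counit {k r} (y : pobj X r) : lowdeg k y -> exists q, sk_counit d X k r q = y.
Proof.
  intros [t [f [x [Hd E]]]]. exists (cls (sk_rel d X k r) {| ss := t; sf := f; sdeg := Hd; sx := x |}).
  rewrite counit_cls. unfold sval; simpl. auto.
Qed.

Lemma sk_nf {k r} (a : sk_el d X k r) : exists b : sk_el d X k r,
  clos_refl_sym_trans _ (sk_rel d X k r) a b /\ is_split_epi (sf b) /\ nondegenerate X (ss b) (sx b).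
Proof.
  destruct a as [t f Hd x].
  destruct (factor d HEZ f) as [t1 [e [m [He [Hm Ef]]]]].
  destruct (EZ_exist d HEZ X HX t1 (pact X m x)) as [t2 [e' [z [He' [Hz E]]]]].
  assert (Hd2 : d t2 < k).
  { pose proof (split_deg d HEZ e' He'). pose proof (mono_deg d HEZ m Hm). lia. }
  exists {| ss := t2; sf := comp e' e; sdeg := Hd2; sx := z |}. simpl. split; [|split; auto; apply split_comp; auto].
  apply rst_trans with {| ss := t1; sf := e; sdeg := Nat.le_lt_trans _ _ _ (mono_deg d HEZ m Hm) Hd; sx := pact X m x |}.
  - apply rst_step. exists m. simpl. auto.
  - apply rst_sym, rst_step. exists e'. simpl. auto.
Qed.

Lemma sk_inj {k r} (l l' : pobj (sk_lt d X k) r) : sk_counit d X k r l = sk_counit d X k r l' -> l = l'.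
Proof.
  rewrite <- (cls_rep _ l), <- (cls_rep _ l'). generalize (rep l) (rep l'). clear l l'. intros a b.
  rewrite !counit_cls. intro E. apply cls_eq.
  destruct (sk_nf a) as [a1 [Ha1 [Sa1 Na1]]]. destruct (sk_nf b) as [b1 [Hb1 [Sb1 Nb1]]].
  rewrite (rst_fun _ _ (@sk_rel_val k r) _ _ Ha1), (rst_fun _ _ (@sk_rel_val k r) _ _ Hb1) in E.
  eapply rst_trans; [exact Ha1|]. eapply rst_trans; [|apply rst_sym; exact Hb1].
  destruct (EZ_unique d HEZ X HX (sf a1) (sf b1) (sx a1) (sx b1) Sa1 Sb1 Na1 Nb1 E) as [th [Ht [E1 E2]]].
  apply rst_sym, rst_step. exists th. auto.
Qed.
End OneX.

Context (X Y : Psh C) (HX : is_psh X) (HY : is_psh Y) (phi : PMap X Y) (Hphi : is_nat phi).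

Definition mp {k r} (a : sk_el d X k r) : sk_el d Y k r :=
  {| ss := ss a; sf := sf a; sdeg := sdeg a; sx := phi _ (sx a) |}.

Lemma skmap_cls {k r} a : sk_map d phi k r (cls (sk_rel d X k r) a) = cls (sk_rel d Y k r) (mp a).
Proof.
  refine (cls_map _ _ mp (fun a b H => rst_step _ _ _ _ _) a).
  destruct H as [w [E1 E2]]. exists w. simpl. split; auto. rewrite E2. apply Hphi.
Qed.

Lemma skmap_nat {k r r'} (h : Hom C r' r) q :
  sk_map d phi k r' (pact (sk_lt d X k) h q) = pact (sk_lt d Y k) h (sk_map d phi k r q).
Proof.
  rewrite <- (cls_rep _ q). generalize (rep q). intro a.
  rewrite (skact_cls X), !skmap_cls, (skact_cls Y). reflexivity.
Qed.

Lemma counit_map {k r} q : sk_counit d Y k r (sk_map d phi k r q) = phi r (sk_counit d X k r q).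
Proof.
  rewrite <- (cls_rep _ q). generalize (rep q). intro a.
  rewrite skmap_cls, (counit_cls Y HY), (counit_cls X HX). unfold sval, mp; simpl. symmetry; apply Hphi.
Qed.

Lemma skmap_widen {k r} q : sk_map d phi (S k) r (sk_widen d X k r q) = sk_widen d Y k r (sk_map d phi k r q).
Proof.
  rewrite <- (cls_rep _ q). generalize (rep q). intro a.
  rewrite (widen_cls X), !skmap_cls, (widen_cls Y). reflexivity.
Qed.

Definition Fh {k r r'} (h : Hom C r' r) (p : pobj X r + pobj (sk_lt d Y k) r) : pobj X r' + pobj (sk_lt d Y k) r' :=
  match p with inl x => inl (pact X h x) | inr l => inr (pact (sk_lt d Y k) h l) end.

Lemma relact_cls {k r r'} (h : Hom C r' r) p :
  pact (relsk d phi k) h (cls (relsk_rel d phi k r) p) = cls (relsk_rel d phi k r') (Fh h p).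
Proof.
  refine (cls_map _ _ (Fh h) (fun a b H => rst_step _ _ _ _ _) p).
  destruct H as [l [E1 E2]]. subst. exists (pact (sk_lt d X k) h l).
  unfold Fh. split; f_equal; [symmetry; apply (counit_nat X HX) | symmetry; apply skmap_nat].
Qed.

Lemma relsk_psh k : is_psh (relsk d phi k).
Proof.
  split.
  - intros r q. rewrite <- (cls_rep _ q). generalize (rep q). intro p. rewrite relact_cls.
    destruct p as [x|l]; unfold Fh; f_equal; f_equal; [apply (pid X HX)|apply (proj1 (sk_psh Y k))].
  - intros r s t f g q. rewrite <- (cls_rep _ q). generalize (rep q). intro p. rewrite !relact_cls.
    destruct p as [x|l]; unfold Fh; f_equal; f_equal; [apply (pcomp X HX)|apply (proj2 (sk_psh Y k))].
Qed.

Definition Gw {k r} (p : pobj X r + pobj (sk_lt d Y k) r) : pobj X r + pobj (sk_lt d Y (S k)) r :=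
  match p with inl x => inl x | inr l => inr (sk_widen d Y k r l) end.

Lemma incl_cls {k r} p : relsk_incl d phi k r (cls (relsk_rel d phi k r) p) = cls (relsk_rel d phi (S k) r) (Gw p).
Proof.
  refine (cls_map _ _ Gw (fun a b H => rst_step _ _ _ _ _) p).
  destruct H as [l [E1 E2]]. subst. exists (sk_widen d X k r l). simpl.
  rewrite (counit_widen X HX), skmap_widen. auto.
Qed.

Lemma incl_nat k : is_nat (relsk_incl d phi k).
Proof.
  intros r s h q. rewrite <- (cls_rep _ q). generalize (rep q). intro p.
  rewrite relact_cls, !incl_cls, relact_cls. destruct p as [x|l]; unfold Fh, Gw; auto.
  f_equal; f_equal; apply (widen_nat Y).
Qed.

Definition thf {k r} (p : pobj X r + pobj (sk_lt d Y k) r) : pobj Y r :=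
  match p with inl x => phi r x | inr l => sk_counit d Y k r l end.
Definition Th k : PMap (relsk d phi k) Y := fun r q => thf (rep q).

Lemma Th_cls {k r} p : Th k r (cls (relsk_rel d phi k r) p) = thf p.
Proof.
  refine (rep_fun (relsk_rel d phi k r) thf _ p).
  intros a b [l [E1 E2]]. subst. simpl. symmetry. apply counit_map.
Qed.

Lemma Th_nat k : is_nat (Th k).
Proof.
  intros r s h q. rewrite <- (cls_rep _ q). generalize (rep q). intro p.
  rewrite relact_cls, !Th_cls. destruct p as [x|l]; simpl; [apply Hphi|apply (counit_nat Y HY)].
Qed.

Lemma Th_incl {k r} q : Th (S k) r (relsk_incl d phi k r q) = Th k r q.
Proof.
  rewrite <- (cls_rep _ q). generalize (rep q). intro p.
  rewrite incl_cls, !Th_cls. destruct p as [x|l]; simpl; auto. apply (counit_widen Y HY).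
Qed.

Lemma Th_img {k r} q : (exists x, phi r x = Th k r q) \/ lowdeg Y k (Th k r q).
Proof.
  rewrite <- (cls_rep _ q). generalize (rep q). intro p. rewrite Th_cls.
  destruct p as [x|l]; simpl; [left; exists x; auto|right; apply (counit_low Y HY)].
Qed.

Lemma Th_of_img {k r} (y : pobj Y r) : (exists x, phi r x = y) \/ lowdeg Y k y -> exists q, Th k r q = y.
Proof.
  intros [[x E]|H].
  - exists (cls (relsk_rel d phi k r) (inl x)). rewrite Th_cls. exact E.
  - destruct (low_counit Y HY y H) as [l El]. exists (cls (relsk_rel d phi k r) (inr l)). rewrite Th_cls. exact El.
Qed.

Lemma Th_inj (Hi : injph X Y phi) {k r} (q q' : pobj (relsk d phi k) r) : Th k r q = Th k r q' -> q = q'.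
Proof.
  rewrite <- (cls_rep _ q), <- (cls_rep _ q'). generalize (rep q) (rep q'). clear q q'.
  intros p p'. rewrite !Th_cls.
  assert (Hmix : forall x l, phi r x = sk_counit d Y k r l ->
     clos_refl_sym_trans _ (relsk_rel d phi k r) (inl x) (inr l)).
  { intros x l E.
    destruct (counit_low Y HY l) as [t [f [y [Hd Ey]]]].
    destruct (NF_low d HEZ Y HY f y) as [t2 [sg [z [Hs [Hz [Hd2 E2]]]]]].
    destruct (EZ_exist d HEZ X HX r x) as [t3 [v [z3 [Hv [Hz3 Ex]]]]].
    assert (E3 : pact Y v (phi t3 z3) = pact Y sg z). { rewrite <- Hphi, <- Ex, E, Ey. exact E2. }
    destruct (EZ_unique d HEZ Y HY v sg _ _ Hv Hs (phi_nondeg X Y HY phi Hphi Hi z3 Hz3) Hz E3) as [th [Ht _]].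
    pose proof (iso_deg d HEZ th Ht).
    assert (Hd3 : d t3 < k) by lia.
    set (l0 := cls (sk_rel d X k r) {| ss := t3; sf := v; sdeg := Hd3; sx := z3 |}).
    assert (El0 : sk_counit d X k r l0 = x). { unfold l0. rewrite (counit_cls X HX). unfold sval; simpl; auto. }
    apply rst_step. exists l0. split; [rewrite El0; auto|]. f_equal.
    apply (sk_inj Y HY). rewrite counit_map, El0. symmetry; exact E. }
  destruct p as [x|l], p' as [x'|l']; simpl; intro E; apply cls_eq.
  - rewrite (Hi _ _ _ E). apply rst_refl.
  - apply Hmix; auto.
  - apply rst_sym, Hmix; auto.
  - rewrite (sk_inj Y HY _ _ E). apply rst_refl.
Qed.
End Sk.

Section Cells.
Context {C : Cat} (d : Ob C -> nat) (HEZ : is_EZ C d).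

Lemma split_notbd {r s} (f : Hom C s r) : is_split_epi f -> ~ bd_pred f.
Proof.
  intros [sc Hs] [t [m [g [Hm [Hi E]]]]]. apply Hi. apply split_mono_iso; auto.
  exists (comp g sc). rewrite cA, <- E. exact Hs.
Qed.

Lemma notbd_split {r s} (f : Hom C s r) : ~ bd_pred f -> is_split_epi f.
Proof.
  intro H. destruct (factor d HEZ f) as [t [e [m [He [Hm E]]]]].
  destruct (classic (is_iso m)) as [Im|Im].
  - subst. apply split_comp; auto. apply iso_split; auto.
  - exfalso. apply H. exists t, m, e. auto.
Qed.

Context (X Y : Psh C) (HX : is_psh X) (HY : is_psh Y) (phi : PMap X Y) (Hphi : is_nat phi)
  (Hi : injph X Y phi) (Hiso : isotropy X Y phi) (n : nat).

Definition ThC := @Th_cls C d X Y HX HY phi Hphi.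
Definition ThIncl := @Th_incl C d X Y HX HY phi Hphi.
Definition ThImg := @Th_img C d X Y HX HY phi Hphi.
Definition ThOf := @Th_of_img C d X Y HX HY phi Hphi.
Definition ThNat := @Th_nat C d X Y HX HY phi Hphi.

Definition cellP (r : Ob C) (y : pobj Y r) : Prop :=
  d r = n /\ nondegenerate Y r y /\ ~ (exists x, phi r x = y).
Definition cell := { r : Ob C & { y : pobj Y r | cellP r y } }.
Definition cell_rel (a b : cell) : Prop := exists g : Hom C (projT1 a) (projT1 b),
  is_iso g /\ proj1_sig (projT2 a) = pact Y g (proj1_sig (projT2 b)).
Definition Icell := quot cell_rel.
Definition rho (i : Icell) : Ob C := projT1 (rep i).
Definition yc (i : Icell) : pobj Y (rho i) := proj1_sig (projT2 (rep i)).
Lemma yc_cell i : cellP (rho i) (yc i).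
Proof. exact (proj2_sig (projT2 (rep i))). Qed.
Lemma rho_deg i : d (rho i) = n.
Proof. apply yc_cell. Qed.
Lemma rho_lt i : d (rho i) < S n.
Proof. rewrite rho_deg. lia. Qed.

Lemma cell_rel_rst : forall a b, clos_refl_sym_trans _ cell_rel a b -> cell_rel a b.
Proof.
  apply rst_equiv.
  - intro a. exists (idm _). split; [apply id_iso|]. symmetry; apply (pid Y HY).
  - intros a b [g [[g' [G1 G2]] E]]. exists g'. split; [exists g; auto|].
    rewrite E, <- (pcomp Y HY), G2, (pid Y HY). reflexivity.
  - intros a b c [g [Ig E1]] [h [Ih E2]]. exists (comp h g). split; [apply iso_comp; auto|].
    rewrite E1, E2, (pcomp Y HY). reflexivity.
Qed.

Definition beta : PMap (copr (fun i => yon (rho i))) (relsk d phi (S n)) :=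
  fun s x => cls (relsk_rel d phi (S n) s) (inr (cls (sk_rel d Y (S n) s)
    {| ss := rho (projT1 x); sf := projT2 x; sdeg := rho_lt (projT1 x); sx := yc (projT1 x) |})).

Lemma Th_beta s x : Th d X Y phi (S n) s (beta s x) = pact Y (projT2 x) (yc (projT1 x)).
Proof. unfold beta. rewrite ThC. unfold thf. rewrite (counit_cls d Y HY). reflexivity. Qed.

Lemma Halpha s (x : pobj (copr (fun i => bdry (rho i))) s) :
  exists q, Th d X Y phi n s q = pact Y (proj1_sig (projT2 x)) (yc (projT1 x)).
Proof.
  destruct x as [i [f [t [m [g [Hm [Hmi E]]]]]]]. simpl.
  apply ThOf. right.
  exists t, g, (pact Y m (yc i)). split.
  - pose proof (mono_lt d HEZ m Hm Hmi). rewrite rho_deg in H. exact H.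
  - rewrite E. apply (pcomp Y HY).
Qed.

Definition alpha : PMap (copr (fun i => bdry (rho i))) (relsk d phi n) :=
  fun s x => proj1_sig (constructive_indefinite_description _ (Halpha s x)).

Lemma Th_alpha s x : Th d X Y phi n s (alpha s x) = pact Y (proj1_sig (projT2 x)) (yc (projT1 x)).
Proof. unfold alpha. destruct (constructive_indefinite_description _ _). simpl. exact e. Qed.

Lemma ThI k {r} q q' : Th d X Y phi k r q = Th d X Y phi k r q' -> q = q'.
Proof. apply (Th_inj d HEZ X Y HX HY phi Hphi Hi). Qed.

Lemma notSn s i (f : Hom C s (rho i)) : ~ bd_pred f ->
  ~ (exists x, phi s x = pact Y f (yc i)) /\ ~ lowdeg d Y n (pact Y f (yc i)).
Proof.
  intro Hb. pose proof (notbd_split f Hb) as Hf. destruct (yc_cell i) as [Hd [Hn Hni]]. split.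
  - intros [x Ex]. destruct (EZ_exist d HEZ X HX s x) as [t [v [z [Hv [Hz E]]]]].
    subst x. rewrite Hphi in Ex.
    destruct (EZ_unique d HEZ Y HY v f _ _ Hv Hf (phi_nondeg X Y HY phi Hphi Hi z Hz) Hn Ex)
      as [th [[th' [T1 T2]] [E1 E2]]].
    apply Hni. exists (pact X th' z). rewrite Hphi, E2, <- (pcomp Y HY), T2, (pid Y HY). reflexivity.
  - intros [t [g [x [Ht E]]]].
    pose proof (NF_deg_le d HEZ Y HY g x f (yc i) Hf Hn (eq_sym E)). lia.
Qed.

Lemma CL s q : (exists a, relsk_incl d phi n s a = q) \/
  (exists x : pobj (copr (fun i => yon (rho i))) s, ~ bd_pred (projT2 x) /\ beta s x = q).
Proof.
  set (y := Th d X Y phi (S n) s q).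
  destruct (classic ((exists x, phi s x = y) \/ lowdeg d Y n y)) as [H|H].
  - left. destruct (ThOf _ _ y H) as [a Ea]. exists a. apply (ThI (S n)).
    rewrite ThIncl. exact Ea.
  - right. destruct (ThImg _ _ q) as [H1|[t [f0 [x0 [Ht E0]]]]]; [exfalso; tauto|].
    fold y in E0.
    destruct (NF_low d HEZ Y HY f0 x0) as [t2 [sg [c [Hs [Hc [Hd2 E2]]]]]].
    rewrite <- E0 in E2.
    assert (Hdn : d t2 = n).
    { destruct (Nat.eq_dec (d t2) n) as [e|e]; auto. exfalso. apply H. right.
      exists t2, sg, c. split; [lia|auto]. }
    assert (Hcell : cellP t2 c).
    { split; auto. split; auto. intros [x Ex]. apply H. left. exists (pact X sg x).
      rewrite Hphi, Ex. auto. }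
    set (i := cls cell_rel (existT _ t2 (exist _ c Hcell) : cell)).
    destruct (cell_rel_rst _ _ (rep_cls cell_rel (existT _ t2 (exist _ c Hcell) : cell)))
      as [g [[g' [G1 G2]] Eg]].
    fold i in g, g', G1, G2, Eg. simpl in Eg. change (yc i = pact Y g c) in Eg.
    exists (existT _ i (comp g' sg)). simpl. split.
    + apply split_notbd. apply split_comp; auto. apply iso_split. exists g; split; auto.
    + apply (ThI (S n)). rewrite Th_beta. simpl. rewrite (pcomp Y HY), Eg, <- (pcomp Y HY g' g), G2, (pid Y HY).
      symmetry; exact E2.
Qed.

Lemma beta_inj s (x x' : pobj (copr (fun i => yon (rho i))) s) : ~ bd_pred (projT2 x) -> ~ bd_pred (projT2 x') -> beta s x = beta s x' -> x = x'.
Proof.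
  destruct x as [i f], x' as [i' f']. simpl. intros Hb Hb' E.
  apply (f_equal (Th d X Y phi (S n) s)) in E. rewrite !Th_beta in E. simpl in E.
  destruct (yc_cell i) as [_ [Hn Hni]]. destruct (yc_cell i') as [_ [Hn' Hni']].
  destruct (EZ_unique d HEZ Y HY f f' _ _ (notbd_split f Hb) (notbd_split f' Hb') Hn Hn' E)
    as [th [Ith [E1 E2]]].
  assert (Eii : i = i').
  { rewrite <- (cls_rep _ i), <- (cls_rep _ i'). apply cls_eq. apply rst_step. exists th. auto. }
  subst i'. assert (th = idm _) by (apply (Hiso _ (yc i)); auto).
  subst. rewrite idl. reflexivity.
Qed.

Lemma incl_inj {r} (a a' : pobj (relsk d phi n) r) :
  relsk_incl d phi n r a = relsk_incl d phi n r a' -> a = a'.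
Proof.
  intro E. apply (f_equal (Th d X Y phi (S n) r)) in E. rewrite !ThIncl in E. apply (ThI n). exact E.
Qed.

Lemma alpha_nat : is_nat alpha.
Proof.
  intros r s f x. apply (ThI n). rewrite ThNat, !Th_alpha. destruct x as [i [g Hg]]. simpl.
  apply (pcomp Y HY).
Qed.

Lemma beta_nat : is_nat beta.
Proof.
  intros r s f x. apply (ThI (S n)). rewrite ThNat, !Th_beta. destruct x as [i g]. simpl.
  apply (pcomp Y HY).
Qed.

Lemma square : forall r a, beta r (bdry_incl rho r a) = relsk_incl d phi n r (alpha r a).
Proof.
  intros r a. apply (ThI (S n)). rewrite ThIncl, Th_beta, Th_alpha. destruct a as [i [g Hg]]. reflexivity.
Qed.

Lemma bd_reduce s i (f : Hom C s (rho i)) (H : bd_pred f) :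
  beta s (existT _ i f) = relsk_incl d phi n s (alpha s (existT _ i (exist _ f H))).
Proof. exact (square s (existT _ i (exist _ f H))). Qed.

Lemma incl_not_beta s a (x : pobj (copr (fun i => yon (rho i))) s) :
  ~ bd_pred (projT2 x) -> relsk_incl d phi n s a <> beta s x.
Proof.
  intros Hb E. apply (f_equal (Th d X Y phi (S n) s)) in E. rewrite ThIncl, Th_beta in E.
  destruct x as [i f]. simpl in *. destruct (notSn s i f Hb) as [N1 N2].
  destruct (ThImg _ _ a) as [H|H]; rewrite E in H; auto.
Qed.

Theorem ii_iii_step : exists (I : Type) (rho : I -> Ob C)
        (alpha : PMap (copr (fun i => bdry (rho i))) (relsk d phi n))
        (beta : PMap (copr (fun i => yon (rho i))) (relsk d phi (S n))),
        (forall i, d (rho i) = n) /\ is_nat alpha /\ is_nat beta /\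
        is_psh_pushout (bdry_incl rho) alpha beta (relsk_incl d phi n).
Proof.
  exists Icell, rho, alpha, beta. split; [exact rho_deg|]. split; [exact alpha_nat|].
  split; [exact beta_nat|]. split; [exact square|].
  intros Z p q HZ Hp Hq Hpq.
  set (Rl := fun s (e : pobj (relsk d phi (S n)) s) (z : pobj Z s) =>
    (exists a, relsk_incl d phi n s a = e /\ z = q s a) \/
    (exists x : pobj (copr (fun i => yon (rho i))) s, ~ bd_pred (projT2 x) /\ beta s x = e /\ z = p s x)).
  assert (Rbeta : forall s x, Rl s (beta s x) (p s x)).
  { intros s [i f]. destruct (classic (bd_pred f)) as [Hb|Hb].
    - left. exists (alpha s (existT _ i (exist _ f Hb))). split; [symmetry; apply bd_reduce|].
      exact (Hpq s (existT _ i (exist _ f Hb))).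
    - right. exists (existT _ i f). auto. }
  assert (Rincl : forall s a, Rl s (relsk_incl d phi n s a) (q s a)).
  { intros s a. left. exists a. auto. }
  assert (Runiq : forall s e z z', Rl s e z -> Rl s e z' -> z = z').
  { intros s e z z' [[a [Ea Ez]]|[x [Hx [Ex Ez]]]] [[a' [Ea' Ez']]|[x' [Hx' [Ex' Ez']]]]; subst.
    - rewrite (incl_inj _ _ Ea'). reflexivity.
    - exfalso. exact (incl_not_beta s a x' Hx' (eq_sym Ex')).
    - exfalso. exact (incl_not_beta s a' x Hx Ea').
    - rewrite (beta_inj s x x' Hx Hx' (eq_sym Ex')). reflexivity. }
  assert (Rex : forall s e, exists z, Rl s e z).
  { intros s e. destruct (CL s e) as [[a Ea]|[x [Hx Ex]]]; subst.
    - exists (q s a). apply Rincl.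
    - exists (p s x). apply Rbeta. }
  set (t := (fun s e => proj1_sig (constructive_indefinite_description _ (Rex s e))) : PMap (relsk d phi (S n)) Z).
  assert (Rt : forall s e, Rl s e (t s e)).
  { intros s e. unfold t. destruct (constructive_indefinite_description _ _). exact r. }
  assert (tb : forall s x, t s (beta s x) = p s x).
  { intros s x. apply (Runiq s (beta s x)); auto. }
  assert (ti : forall s a, t s (relsk_incl d phi n s a) = q s a).
  { intros s a. apply (Runiq s (relsk_incl d phi n s a)); auto. }
  exists t. split; [|split; [exact tb|split; [exact ti|]]].
  - intros r s f e. destruct (Rt s e) as [[a [Ea Ez]]|[x [Hx [Ex Ez]]]].
    + rewrite Ez, <- Ea, <- (incl_nat d X Y HX phi Hphi n), ti. apply Hq.
    + rewrite Ez, <- Ex, <- beta_nat, tb. apply Hp.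
  - intros t' _ Ht1 Ht2 r e. destruct (Rt r e) as [[a [Ea Ez]]|[x [Hx [Ex Ez]]]].
    + rewrite Ez, <- Ea. apply Ht2.
    + rewrite Ez, <- Ex. apply Ht1.
Qed.
End Cells.

Section III.
Context {C : Cat} (d : Ob C -> nat) (HEZ : is_EZ C d).
Context (X Y : Psh C) (HX : is_psh X) (HY : is_psh Y) (phi : PMap X Y) (Hphi : is_nat phi).

Definition RPsh k := relsk_psh d X Y HX phi Hphi k.

Section PO.
Context (n : nat) (I : Type) (rho : I -> Ob C)
  (alpha : PMap (copr (fun i => bdry (rho i))) (relsk d phi n))
  (beta : PMap (copr (fun i => yon (rho i))) (relsk d phi (S n)))
  (Hdeg : forall i, d (rho i) = n) (Ha : is_nat alpha) (Hb : is_nat beta)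
  (HPO : is_psh_pushout (bdry_incl rho) alpha beta (relsk_incl d phi n)).

Definition Zpow : Psh C := {| pobj u := forall v, Hom C v u -> pobj (relsk d phi n) v -> Prop;
  pact u u' h P := fun v g b => P v (comp h g) b |}.

Lemma Zpow_psh : is_psh Zpow.
Proof.
  split.
  - intros r P. simpl. apply functional_extensionality_dep; intro v.
    apply functional_extensionality; intro g. rewrite idl. reflexivity.
  - intros r s t f g P. simpl. apply functional_extensionality_dep; intro v.
    apply functional_extensionality; intro k. rewrite cA. reflexivity.
Qed.

Lemma T1 {r} (a a' : pobj (relsk d phi n) r) : relsk_incl d phi n r a = relsk_incl d phi n r a' -> a = a'.
Proof.
  intro E.
  set (qp := (fun u a => fun v g b => b = pact (relsk d phi n) g a) : PMap (relsk d phi n) Zpow).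
  set (pp := (fun u (x : pobj (copr (fun i => yon (rho i))) u) => fun v g b =>
      exists H : bd_pred (comp (projT2 x) g), b = alpha v (existT _ (projT1 x) (exist _ (comp (projT2 x) g) H)))
      : PMap (copr (fun i => yon (rho i))) Zpow).
  assert (Hq : is_nat qp).
  { intros r1 s f x. unfold qp. cbn [pact Zpow]. apply functional_extensionality_dep; intro v.
    apply functional_extensionality; intro g. rewrite (proj2 (RPsh n)). reflexivity. }
  assert (Hp : is_nat pp).
  { intros r1 s f [i h]. unfold pp. simpl. apply functional_extensionality_dep; intro v.
    apply functional_extensionality; intro g. rewrite (cA g f h). reflexivity. }
  assert (Hpq : forall r a, pp r (bdry_incl rho r a) = qp r (alpha r a)).
  { intros r1 [i [h Hh]]. unfold pp, qp. cbn [bdry_incl projT1 projT2 proj1_sig]. apply functional_extensionality_dep; intro v.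
    apply functional_extensionality; intro g. apply functional_extensionality; intro b.
    rewrite <- Ha. cbn [pact copr bdry projT1 projT2 proj1_sig]. apply propositional_extensionality. split.
    - intros [H Eb]. rewrite Eb. f_equal. f_equal. apply sig_ext. reflexivity.
    - intro Eb. exists (bd_pred_act g h Hh). exact Eb. }
  destruct (proj2 HPO Zpow pp qp Zpow_psh Hp Hq Hpq) as [t [_ [_ [Ht2 _]]]].
  pose proof (f_equal (t r) E) as E2. rewrite !Ht2 in E2. unfold qp in E2.
  pose proof (f_equal (fun P => P r (idm r) a) E2) as E3. cbv beta in E3.
  rewrite !(proj1 (RPsh n)) in E3. rewrite <- E3. reflexivity.
Qed.

Definition Zsv : Psh C := {| pobj u := forall v, Hom C v u -> Prop;
  pact u u' h P := fun v g => P v (comp h g) |}.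

Lemma Zsv_psh : is_psh Zsv.
Proof.
  split.
  - intros r P. simpl. apply functional_extensionality_dep; intro v.
    apply functional_extensionality; intro g. rewrite idl. reflexivity.
  - intros r s t f g P. simpl. apply functional_extensionality_dep; intro v.
    apply functional_extensionality; intro k. rewrite cA. reflexivity.
Qed.

Lemma T2 {s} (e : pobj (relsk d phi (S n)) s) :
  (exists a, relsk_incl d phi n s a = e) \/ (exists x, beta s x = e).
Proof.
  set (pt := (fun u _ => fun v g => True) : PMap (copr (fun i => yon (rho i))) Zsv).
  set (qt := (fun u _ => fun v g => True) : PMap (relsk d phi n) Zsv).
  destruct (proj2 HPO Zsv pt qt Zsv_psh (fun _ _ _ _ => eq_refl) (fun _ _ _ _ => eq_refl) (fun _ _ => eq_refl))
    as [t [_ [_ [_ Hu]]]].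
  set (t1 := (fun u e => fun v g => (exists a, relsk_incl d phi n v a = pact (relsk d phi (S n)) g e) \/
      (exists x, beta v x = pact (relsk d phi (S n)) g e)) : PMap (relsk d phi (S n)) Zsv).
  assert (N1 : is_nat t1).
  { intros r1 s1 f x. unfold t1. cbn [pact Zsv]. apply functional_extensionality_dep; intro v.
    apply functional_extensionality; intro g. rewrite (proj2 (RPsh (S n))). reflexivity. }
  assert (E1 : forall r b, t1 r (beta r b) = pt r b).
  { intros r b. unfold t1, pt. apply functional_extensionality_dep; intro v.
    apply functional_extensionality; intro g. apply propositional_extensionality. split; auto.
    intros _. right. exists (pact _ g b). apply Hb. }
  assert (E2 : forall r c, t1 r (relsk_incl d phi n r c) = qt r c).
  { intros r c. unfold t1, qt. apply functional_extensionality_dep; intro v.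
    apply functional_extensionality; intro g. apply propositional_extensionality. split; auto.
    intros _. left. exists (pact _ g c). apply (incl_nat d X Y HX phi Hphi). }
  pose proof (Hu t1 N1 E1 E2 s e) as U1.
  pose proof (Hu (fun u _ => fun v g => True) (fun _ _ _ _ => eq_refl) (fun _ _ => eq_refl) (fun _ _ => eq_refl) s e) as U2.
  rewrite <- U2 in U1. assert (H := f_equal (fun P => P s (idm s)) U1). simpl in H.
  assert (H' : t1 s e s (idm s)) by (rewrite H; exact Logic.I).
  unfold t1 in H'. rewrite (proj1 (RPsh (S n))) in H'. exact H'.
Qed.

Definition Zcp : Psh C := {| pobj u := forall v, Hom C v u -> pobj (copr (fun i => yon (rho i))) v -> Prop;
  pact u u' h P := fun v g b => P v (comp h g) b |}.

Lemma Zcp_psh : is_psh Zcp.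
Proof.
  split.
  - intros r P. simpl. apply functional_extensionality_dep; intro v.
    apply functional_extensionality; intro g. rewrite idl. reflexivity.
  - intros r s t f g P. simpl. apply functional_extensionality_dep; intro v.
    apply functional_extensionality; intro k. rewrite cA. reflexivity.
Qed.

Lemma T3 {s} (x x' : pobj (copr (fun i => yon (rho i))) s) :
  ~ bd_pred (projT2 x) -> beta s x = beta s x' -> x = x'.
Proof.
  intros Hx E.
  set (pc := (fun u x => fun v g b => b = pact (copr (fun i => yon (rho i))) g x /\ ~ bd_pred (projT2 b))
     : PMap (copr (fun i => yon (rho i))) Zcp).
  set (qc := (fun u _ => fun v g b => False) : PMap (relsk d phi n) Zcp).
  assert (Hp : is_nat pc).
  { intros r1 s1 f [i h]. unfold pc. simpl. apply functional_extensionality_dep; intro v.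
    apply functional_extensionality; intro g. rewrite (cA g f h). reflexivity. }
  assert (Hpq : forall r a, pc r (bdry_incl rho r a) = qc r (alpha r a)).
  { intros r1 [i [h Hh]]. unfold pc, qc. simpl. apply functional_extensionality_dep; intro v.
    apply functional_extensionality; intro g. apply functional_extensionality; intro b.
    apply propositional_extensionality. split; [|intros []].
    intros [Eb Nb]. subst b. simpl in Nb. apply Nb. apply bd_pred_act. exact Hh. }
  destruct (proj2 HPO Zcp pc qc Zcp_psh Hp (fun _ _ _ _ => eq_refl) Hpq) as [t [_ [Ht1 _]]].
  pose proof (f_equal (t s) E) as E2. rewrite !Ht1 in E2. unfold pc in E2.
  pose proof (f_equal (fun P => P s (idm s) x) E2) as E3. cbv beta in E3.
  assert (L : x = pact (copr (fun i => yon (rho i))) (idm s) x /\ ~ bd_pred (projT2 x)).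
  { split; auto. destruct x; simpl; rewrite idr; reflexivity. }
  pose proof (eq_ind _ (fun P : Prop => P) L _ E3) as L2. destruct L2 as [L3 _]. rewrite L3. clear L. destruct x'; simpl; rewrite idr; reflexivity.
Qed.
End PO.
End III.

Section Final.
Context {C : Cat} (d : Ob C -> nat) (HEZ : is_EZ C d) (X Y : Psh C) (HX : is_psh X) (HY : is_psh Y)
  (phi : PMap X Y) (Hphi : is_nat phi).

Lemma iii_inj (H3 : forall n : nat,
      exists (I : Type) (rho : I -> Ob C)
        (alpha : PMap (copr (fun i => bdry (rho i))) (relsk d phi n))
        (beta : PMap (copr (fun i => yon (rho i))) (relsk d phi (S n))),
        (forall i, d (rho i) = n) /\ is_nat alpha /\ is_nat beta /\
        is_psh_pushout (bdry_incl rho) alpha beta (relsk_incl d phi n)) : injph X Y phi.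
Proof.
  assert (Iota : forall k r (x x' : pobj X r), cls (relsk_rel d phi k r) (inl x) = cls (relsk_rel d phi k r) (inl x') -> x = x').
  { induction k as [|k IH]; intros r x x' E.
    - apply cls_inj in E. assert (E2 : (inl x : pobj X r + pobj (sk_lt d Y 0) r) = inl x').
      { apply (rst_fun (relsk_rel d phi 0 r) (fun p => p)); [|exact E].
        intros a a' [l _]. exfalso. pose proof (sdeg (rep l)). lia. }
      injection E2; auto.
    - apply (IH r). destruct (H3 k) as [I [rho [alpha [beta [_ [Ha [_ HPO]]]]]]].
      apply (T1 d X Y HX phi Hphi k I rho alpha beta Ha HPO). rewrite !(incl_cls d X Y HX phi Hphi). exact E. }
  intros r x x' E. apply (Iota (S (d r)) r).
  set (mk := fun z : pobj X r => cls (sk_rel d X (S (d r)) r)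
     {| ss := r; sf := idm r; sdeg := Nat.lt_succ_diag_r (d r); sx := z |}).
  assert (K : forall z, cls (relsk_rel d phi (S (d r)) r) (inl z) =
      cls (relsk_rel d phi (S (d r)) r) (inr (sk_map d phi (S (d r)) r (mk z)))).
  { intro z. apply cls_eq, rst_step. exists (mk z). split; auto. f_equal. unfold mk.
    rewrite (counit_cls d X HX). unfold sval; simpl. symmetry; apply (pid X HX). }
  rewrite !K. unfold mk. rewrite !(skmap_cls d X Y phi Hphi). unfold mp; simpl. rewrite E. reflexivity.
Qed.

Lemma iii_iso (H3 : forall n : nat,
      exists (I : Type) (rho : I -> Ob C)
        (alpha : PMap (copr (fun i => bdry (rho i))) (relsk d phi n))
        (beta : PMap (copr (fun i => yon (rho i))) (relsk d phi (S n))),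
        (forall i, d (rho i) = n) /\ is_nat alpha /\ is_nat beta /\
        is_psh_pushout (bdry_incl rho) alpha beta (relsk_incl d phi n)) : isotropy X Y phi.
Proof.
  intros r y Hy Hn g Hg Eg.
  set (n := d r).
  destruct (H3 n) as [I [rho [alpha [beta [Hd [Ha [Hb HPO]]]]]]].
  set (a0 := Build_sk_el d Y (S n) r r (idm r) (Nat.lt_succ_diag_r n) y).
  set (e := cls (relsk_rel d phi (S n) r) (inr (cls (sk_rel d Y (S n) r) a0))).
  assert (Te : Th d X Y phi (S n) r e = y).
  { unfold e. rewrite (Th_cls d X Y HX HY phi Hphi). unfold thf. rewrite (counit_cls d Y HY).
    unfold sval, a0; simpl. apply (pid Y HY). }
  assert (Hlow : forall t (f : Hom C r t) x, d t < n -> y <> pact Y f x).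
  { intros t f x Ht E. pose proof (nondeg_id_deg d HEZ Y HY y t f x Hy E). unfold n in Ht. lia. }
  destruct (T2 d X Y HX phi Hphi n I rho alpha beta Hb HPO e) as [[a Ea]|[x Ex]].
  - exfalso. rewrite <- Ea, (Th_incl d X Y HX HY phi Hphi) in Te.
    destruct (Th_img d X Y HX HY phi Hphi a) as [[x Ex]|[t [f [x [Ht Ex]]]]].
    + apply Hn. exists x. congruence.
    + apply (Hlow t f x Ht). congruence.
  - destruct x as [i f].
    set (c := Th d X Y phi (S n) (rho i) (beta (rho i) (existT _ i (idm (rho i))))).
    assert (Eb : beta r (existT _ i f) = pact (relsk d phi (S n)) f (beta (rho i) (existT _ i (idm (rho i))))).
    { rewrite <- Hb. simpl. rewrite idl. reflexivity. }
    assert (Ey : y = pact Y f c).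
    { rewrite <- Te, <- Ex, Eb. unfold c. apply (Th_nat d X Y HX HY phi Hphi). }
    assert (Nb : ~ bd_pred f).
    { intros [t [m [g' [Hm [Hmi Ef]]]]]. apply (Hlow t g' (pact Y m c)).
      - pose proof (mono_lt d HEZ m Hm Hmi). rewrite Hd in H. exact H.
      - rewrite Ey, Ef. apply (pcomp Y HY). }
    assert (If : is_iso f).
    { apply (nondeg_split_iso Y f c (notbd_split d HEZ f Nb)). rewrite <- Ey. exact Hy. }
    assert (Ege : pact (relsk d phi (S n)) g e = e).
    { unfold e. rewrite (relact_cls d X Y HX phi Hphi). unfold Fh. rewrite (skact_cls d Y).
      do 2 f_equal. apply cls_eq. apply rst_step. exists g. unfold prec, a0; simpl.
      split; [rewrite idl, idr; reflexivity| symmetry; exact Eg]. }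
    assert (Eb2 : beta r (existT _ i (comp f g)) = pact (relsk d phi (S n)) g (beta r (existT _ i f))).
    { rewrite <- Hb. reflexivity. }
    assert (Eb3 : beta r (existT (fun i => pobj (yon (rho i)) r) i f) = beta r (existT (fun i => pobj (yon (rho i)) r) i (comp f g))).
    { etransitivity; [exact Ex|]. etransitivity; [symmetry; exact Ege|]. rewrite <- Ex. exact (eq_sym Eb2). }
    pose proof (T3 d X Y phi n I rho alpha beta HPO (existT _ i f) (existT _ i (comp f g)) Nb Eb3) as E3.
    apply inj_pair2 in E3. apply (iso_cancel_l f); auto. rewrite idr. symmetry. exact E3.
Qed.
End Final.

Theorem proposition7p2 (C : Cat) (d : Ob C -> nat) (HEZ : is_EZ C d)
  (X Y : Psh C) (HX : is_psh X) (HY : is_psh Y)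
  (phi : PMap X Y) (Hphi : is_nat phi) :
  let cond_i :=
    forall r : Ob C, free_aut_ext Y r (rel_latch_map phi r) in
  let cond_ii :=
    is_psh_mono phi /\
    forall (r : Ob C) (y : pobj Y r), nondegenerate Y r y ->
      ~ (exists x, phi r x = y) ->
      forall g : Hom C r r, is_iso g -> pact Y g y = y -> g = idm r in
  let cond_iii :=
    forall n : nat,
      exists (I : Type) (rho : I -> Ob C)
        (alpha : PMap (copr (fun i => bdry (rho i))) (relsk d phi n))
        (beta : PMap (copr (fun i => yon (rho i))) (relsk d phi (S n))),
        (forall i, d (rho i) = n) /\ is_nat alpha /\ is_nat beta /\
        is_psh_pushout (bdry_incl rho) alpha beta (relsk_incl d phi n) in
  (cond_i <-> cond_ii) /\ (cond_ii <-> cond_iii).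
Proof.
  intros cond_i cond_ii cond_iii. subst cond_i cond_ii cond_iii.
  match goal with |- (?A <-> ?B) /\ _ => assert (I_II : A <-> B) end.
  { split.
    - intro H. split.
      + apply inj_mono. exact (i_to_inj d HEZ X Y HX HY phi Hphi H).
      + exact (i_to_iso X Y phi H).
    - intros [Hm Hiso]. exact (ii_to_i d HEZ X Y HX HY phi Hphi (mono_inj X Y HX phi Hphi Hm) Hiso). }
  split; auto. split.
  - intros [Hm Hiso] n. exact (ii_iii_step d HEZ X Y HX HY phi Hphi (mono_inj X Y HX phi Hphi Hm) Hiso n).
  - intro H3. split.
    + apply inj_mono. eapply iii_inj; eassumption.
    + eapply iii_iso; eassumption.
Qed.
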